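(* Let $\varepsilon>0$ and let $f\colon [N]\times[D]\to[M]$ be a $(k,\varepsilon)$-extractor. Then for every set $S\subseteq[N]$, fewer than $2^k$ elements of $S$ are $\varepsilon$-poor in $S$.
   Context: $[n]=\{1,\dots,n\}$. A function $f\colon [N]\times[D]\to[M]$ is a $(k,\varepsilon)$-extractor if for all $A\subseteq[N]$ with $|A|\ge 2^k$ and all $B\subseteq[M]$, $\left|\Pr\{f(X_A,X_D)\in B\} - |B|/M\right|\le\varepsilon$, where $X_A, X_D$ are independent uniformly random elements of $A$ and $[D]$. For $S\subseteq[N]$: an element $y\in[M]$ is $b$-bad for $S$ if $|f^{-1}(y)\cap S| > bD|S|/M$ (here $f^{-1}(y)=\{u\in[N]: f(u,i)=y \text{ for some } i\in[D]\}$); an element $x\in S$ is $\varepsilon$-poor in $S$ if for more than a $2\varepsilon$-fraction of $i\in[D]$ the value $f(x,i)$ is $(1/\varepsilon)$-bad for $S$. *)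

(* Defs.v *)
(* [n] = {1..n} is modelled by the ordinal type 'I_n = {0..n-1}. *)
From mathcomp Require Import all_boot all_order all_algebra.
Set Implicit Arguments. Unset Strict Implicit. Unset Printing Implicit Defensive.
Import Order.TTheory GRing.Theory Num.Theory.
Local Open Scope ring_scope.

Section Ext.
Variables (R : realFieldType) (N D M : nat) (f : 'I_N -> 'I_D -> 'I_M).

(* Pr{ f(X_A, X_D) \in B } with X_A uniform on A, X_D uniform on [D], independent *)
Definition ext_prob (A : {set 'I_N}) (B : {set 'I_M}) : R :=
  #|[set p : 'I_N * 'I_D | (p.1 \in A) && (f p.1 p.2 \in B)]|%:R
    / (#|A| * D)%:R.

Definition is_extractor (k : nat) (eps : R) : Prop :=
  forall A : {set 'I_N}, (2 ^ k <= #|A|)%N ->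
  forall B : {set 'I_M}, `|ext_prob A B - #|B|%:R / M%:R| <= eps.

Definition preim (y : 'I_M) : {set 'I_N} := [set u | [exists i, f u i == y]].

Definition is_bad (b : R) (S : {set 'I_N}) (y : 'I_M) : bool :=
  b * D%:R * #|S|%:R / M%:R < #|preim y :&: S|%:R.

Definition is_poor (eps : R) (S : {set 'I_N}) (x : 'I_N) : bool :=
  (x \in S) &&
  (2 * eps < #|[set i : 'I_D | is_bad eps^-1 S (f x i)]|%:R / D%:R).

End Ext.

(* Main.v *)
Require Import Defs.
From mathcomp Require Import all_boot all_order all_algebra.
From mathcomp Require Import ring lra.
Import Order.TTheory GRing.Theory Num.Theory.
Local Open Scope ring_scope.

Lemma card_pairs (N D : nat) (P : {set 'I_N}) (Q : 'I_N -> 'I_D -> bool) :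
  #|[set p : 'I_N * 'I_D | (p.1 \in P) && Q p.1 p.2]| =
  (\sum_(x in P) #|[set i | Q x i]|)%N.
Proof.
rewrite -sum1_card.
transitivity (\sum_(x in P) \sum_(i | Q x i) 1)%N.
  rewrite pair_big_dep; apply: eq_bigl => p; by rewrite inE.
apply: eq_bigr => x _; rewrite -sum1_card; apply: eq_bigl => i; by rewrite inE.
Qed.

Lemma sum_preim (N D M : nat) (f : 'I_N -> 'I_D -> 'I_M) (S : {set 'I_N}) :
  (\sum_(y : 'I_M) #|Defs.preim f y :&: S| <= #|S| * D)%N.
Proof.
have E y : #|Defs.preim f y :&: S| = (\sum_(u in S) (u \in Defs.preim f y))%N.
  rewrite -sum1_card big_mkcond [RHS]big_mkcond /=; apply: eq_bigr => u _.
  rewrite inE; by case: (u \in Defs.preim f y); case: (u \in S).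
under eq_bigr do rewrite E.
rewrite exchange_big /= -sum_nat_const.
apply: leq_sum => u _.
have -> : (\sum_(y : 'I_M) (u \in Defs.preim f y) = #|[set f u i | i in [set: 'I_D]]|)%N.
  rewrite -sum1_card [RHS]big_mkcond /=; apply: eq_bigr => y _.
  rewrite !inE; case: existsP => [[i /eqP <-]|H].
    by rewrite imset_f ?inE.
  case: imsetP => // [[i _ Ei]]; case: H; exists i; by rewrite Ei.
by apply: leq_trans (leq_imset_card _ _) _; rewrite cardsT card_ord.
Qed.

Theorem lemma7 (R : realFieldType) (N D M : nat) (f : 'I_N -> 'I_D -> 'I_M)
    (k : nat) (eps : R) :
  0 < eps -> (0 < D)%N -> is_extractor f k eps ->
  forall S : {set 'I_N},
    (#|[set x in S | is_poor f eps S x]| < 2 ^ k)%N.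
Proof.
move=> eps0 D0 ext S.
set P := [set x in S | is_poor f eps S x].
rewrite ltnNge; apply/negP => HP.
have P0 : (0 < #|P|)%N by apply: leq_trans HP; rewrite expn_gt0.
have /card_gt0P [x0 x0P] := P0.
have M0 : (0 < M)%N by exact: leq_ltn_trans (leq0n _) (ltn_ord (f x0 (Ordinal D0))).
have PS : P \subset S by apply/subsetP => x; rewrite inE => /andP[].
have S0 : (0 < #|S|)%N by apply: leq_trans P0 (subset_leq_card PS).
set B := [set y | is_bad f eps^-1 S y].
have := ext P HP B.
set d : R := D%:R. set m : R := M%:R. set s : R := #|S|%:R.
have d0 : 0 < d by rewrite ltr0n.
have m0 : 0 < m by rewrite ltr0n.
have s0 : 0 < s by rewrite ltr0n.
have HB : #|B|%:R / m <= eps.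
  have H1 : #|B|%:R * (eps^-1 * d * s / m) <= d * s.
    apply: le_trans (_ : (\sum_(y in B) #|Defs.preim f y :&: S|%:R) <= _).
      rewrite -sum1_card natr_sum mulr_suml; apply: ler_sum => y.
      rewrite inE /is_bad => /ltW; by rewrite mul1r.
    apply: le_trans (_ : (\sum_(y : 'I_M) #|Defs.preim f y :&: S|%:R) <= _).
      by rewrite [X in _ <= X](bigID (mem B)) /= lerDl sumr_ge0.
    by rewrite -natr_sum /d /s -natrM mulnC ler_nat sum_preim.
  have e1 : eps * eps^-1 = 1 by rewrite mulfV // gt_eqF.
  have H2 : #|B|%:R / m * eps^-1 <= 1.
    rewrite -(ler_pM2r (mulr_gt0 d0 s0)) mul1r; apply: le_trans H1.
    by rewrite le_eqVlt; apply/orP; left; apply/eqP; ring.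
  have := ler_pM2r eps0 (#|B|%:R / m * eps^-1) 1.
  by rewrite H2 mul1r divfK; [move=> ->|rewrite gt_eqF].
have H1 : 2 * eps < ext_prob R f P B.
  rewrite /ext_prob (@card_pairs N D P (fun x i => f x i \in B)) natr_sum natrM -/d.
  rewrite ltr_pdivlMr; last by rewrite mulr_gt0 // ltr0n.
  rewrite -sum1_card natr_sum mulr_suml mulr_sumr.
  apply: ltr_sum; first by apply/hasP; exists x0; rewrite ?mem_index_enum.
  move=> x xP; rewrite mul1r.
  have := xP; rewrite inE => /andP[_ /andP[_ H]].
  rewrite -ltr_pdivlMr //; apply: lt_le_trans H _.
  apply: ler_wpM2r; first by rewrite invr_ge0 ltW.
  rewrite ler_nat; apply: subset_leq_card; apply/subsetP => i; by rewrite !inE.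
move=> H; move: (ler_normlW H) => H'.
lra.
Qed.
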